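(* Let $G=(V,E)$ be a simple undirected graph with $n=|V|$ vertices and $m=|E|$ edges, let $b$ be a real number, and let $$\mathcal{P}_1=\Big\{(x,y)\in\mathbb{R}^m_{+}\times[0,1]^n:\ 1-y_u-y_v\le x_{uv}\ \text{for all } \{u,v\}\in E,\ \ \textstyle\sum_{v\in V}y_v\le b\Big\}.$$ Then: (1) for every edge $\{u,v\}\in E$, the inequality $x_{uv}\ge 0$ is facet-defining for $\mathcal{P}_1$ if $b\ge 2$; (2) for every vertex $v\in V$, the inequality $y_v\ge 0$ is facet-defining for $\mathcal{P}_1$ if $b\ge 1$; (3) for every vertex $v\in V$, the inequality $y_v\le 1$ is facet-defining for $\mathcal{P}_1$ if $b\ge 2$.
   Context: $x$ is indexed by edges and $y$ by vertices of $G$; $\mathcal{P}_1$ is the linear relaxation of the MIP formulation of the 1-hop distance-based critical node detection problem. An inequality is facet-defining if it is valid for $\mathcal{P}_1$ and the face it induces has dimension $\dim\mathcal{P}_1-1$. *)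

(* Defs.v *)
From mathcomp Require Import all_boot all_order all_algebra.
From mathcomp Require Import reals.
Set Implicit Arguments. Unset Strict Implicit. Unset Printing Implicit Defensive.
Import Order.TTheory GRing.Theory Num.Theory.
Local Open Scope ring_scope.

Section Defs.
Variables (R : realType) (V : finType) (adj : rel V).

Definition is_edge (s : {set V}) : bool :=
  [exists u, exists v, adj u v && (s == [set u; v])].

Definition edge := {s : {set V} | is_edge s}.

Definition point := ((edge -> R) * (V -> R))%type.

Definition P1 (b : R) (p : point) : Prop :=
  [/\ forall e : edge, 0 <= p.1 e,
      forall v : V, 0 <= p.2 v /\ p.2 v <= 1,
      forall e : edge, 1 - \sum_(w in val e) p.2 w <= p.1 e
    & \sum_(v : V) p.2 v <= b].

Definition aff_indep (k : nat) (p : 'I_k -> point) : Prop :=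
  forall c : 'I_k -> R,
    \sum_(i < k) c i = 0 ->
    (forall e, \sum_(i < k) c i * (p i).1 e = 0) ->
    (forall v, \sum_(i < k) c i * (p i).2 v = 0) ->
    forall i, c i = 0.

Definition has_aff_indep (S : point -> Prop) (k : nat) : Prop :=
  exists p : 'I_k -> point, (forall i, S (p i)) /\ aff_indep p.

(* dim S = r - 1, i.e. r is the maximal number of affinely independent
   points of S (r = 0 for the empty set, dimension -1) *)
Definition aff_rank (S : point -> Prop) (r : nat) : Prop :=
  has_aff_indep S r /\ ~ has_aff_indep S r.+1.

Definition dim_eq (S : point -> Prop) (d : int) : Prop :=
  exists r : nat, aff_rank S r /\ d = r%:Z - 1.

Definition linform (ax : edge -> R) (ay : V -> R) (p : point) : R :=
  \sum_(e : edge) ax e * p.1 e + \sum_(v : V) ay v * p.2 v.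

Definition valid_ineq (P : point -> Prop) ax ay (beta : R) : Prop :=
  forall p, P p -> linform ax ay p <= beta.

Definition face (P : point -> Prop) ax ay (beta : R) : point -> Prop :=
  fun p => P p /\ linform ax ay p = beta.

Definition facet_defining (P : point -> Prop) ax ay (beta : R) : Prop :=
  valid_ineq P ax ay beta /\
  exists d : int, dim_eq P d /\ dim_eq (face P ax ay beta) (d - 1).

Definition unit_e (e0 : edge) : edge -> R := fun e => (e == e0)%:R.
Definition unit_v (v0 : V) : V -> R := fun v => (v == v0)%:R.
Definition zero_e : edge -> R := fun _ => 0.
Definition zero_v : V -> R := fun _ => 0.

End Defs.

(* Main.v *)
Require Import Defs.
From mathcomp Require Import all_boot all_order all_algebra.
From mathcomp Require Import reals.
From mathcomp Require Import ring lra zify.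
Set Implicit Arguments. Unset Strict Implicit. Unset Printing Implicit Defensive.
Import Order.TTheory GRing.Theory Num.Theory.
Local Open Scope ring_scope.

Lemma exists_dep (R : fieldType) (I : finType) (k : nat) (A : 'I_k -> I -> R) :
  (#|I| < k)%N -> exists c : 'I_k -> R, (exists i, c i != 0) /\
     forall j, \sum_i c i * A i j = 0.
Proof.
move=> hk.
pose M := \matrix_(i < k, j < #|I|) A i (enum_val j).
have hK : kermx M != 0.
  apply/eqP => h0.
  have := mxrank_ker M; rewrite h0 mxrank0.
  have := rank_leq_col M; move: (\rank M : nat) => rk; clear h0 M.
  move=> h1 h2; have {h2}: (k - rk == 0)%N by apply/eqP; rewrite -h2.
  rewrite subn_eq0 => h2.
  have := leq_ltn_trans (leq_trans h2 h1) hk; by rewrite ltnn.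
case: (pickP [pred ij : 'I_k * 'I_k | kermx M ij.1 ij.2 != 0]); last first.
  move=> hn; case/negP: hK; apply/eqP/matrixP => i j; have := hn (i, j).
  by move=> /= /negbFE/eqP ->; rewrite mxE.
case=> r i /= hri.
exists (fun i => kermx M r i); split; first by exists i.
move=> j.
have := congr1 (fun X : 'M[R]_(k, #|I|) => X r (enum_rank j)) (mulmx_ker M).
rewrite /= [in X in X = _ -> _]mxE mxE => h.
rewrite -[X in _ = X]h; apply: eq_bigr => l _.
by congr (_ * _); rewrite /M mxE enum_rankK.
Qed.

Section Pf.
Variables (R : realType) (V : finType) (adj : rel V).
Notation pt := (point R adj).
Notation K := (edge adj + V)%type.

Definition coord (k : K) (p : pt) : R :=
  match k with inl e => p.1 e | inr v => p.2 v end.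

Definition bump (q : pt) (k : option K) (d : R) : pt :=
  match k with
  | Some (inl e) => (fun f => q.1 f + (f == e)%:R * d, q.2)
  | Some (inr v) => (q.1, fun w => q.2 w + (w == v)%:R * d)
  | None => q
  end.

Lemma coord_bump (k : K) q k' d :
  coord k (bump q k' d) = coord k q + (Some k == k')%:R * d.
Proof.
case: k' => [[e'|v']|]; case: k => [e|v] /=; by rewrite ?mul0r ?addr0.
Qed.

Lemma sum_delta (T : finType) (a : T -> R) (t : T) :
  \sum_s (s == t)%:R * a s = a t.
Proof.
rewrite (bigD1 t) //= eqxx mul1r big1 ?addr0 // => s /negbTE ->.
by rewrite mul0r.
Qed.

Definition aff_indepT (T : finType) (p : T -> pt) : Prop :=
  forall c : T -> R, \sum_t c t = 0 ->
    (forall e, \sum_t c t * (p t).1 e = 0) ->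
    (forall v, \sum_t c t * (p t).2 v = 0) -> forall t, c t = 0.

Lemma transfer (S : pt -> Prop) (T : finType) (p : T -> pt) :
  (forall t, S (p t)) -> aff_indepT p -> has_aff_indep S #|T|.
Proof.
move=> hS hp; exists (fun i => p (enum_val i)); split => // c h0 h1 h2 i.
have E (F : T -> R) : \sum_(i < #|T|) c i * F (enum_val i)
   = \sum_t c (enum_rank t) * F t.
  rewrite (reindex enum_rank); last by apply: onW_bij; exact: enum_rank_bij.
  by apply: eq_bigr => t _; rewrite enum_rankK.
have := hp (fun t => c (enum_rank t)) _ _ _ (enum_val i).
rewrite enum_valK; apply.
- have /= h := E (fun _ => 1).
  have e1 : \sum_t c (enum_rank t) = \sum_t c (enum_rank t) * 1.
    by apply: eq_bigr => t _; rewrite mulr1.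
  have e2 : \sum_(i < #|T|) c i * 1 = \sum_i c i.
    by apply: eq_bigr => t _; rewrite mulr1.
  by rewrite e1 -h e2.
- by move=> e; rewrite -(E (fun t => (p t).1 e)); exact: h1.
- by move=> v; rewrite -(E (fun t => (p t).2 v)); exact: h2.
Qed.

Definition pstar (T : finType) (t0 : T) (q0 : pt) (dir : T -> option K) (dl : T -> R) (s : T) : pt :=
  if s == t0 then q0 else bump q0 (dir s) (dl s).

Lemma star_indep (T : finType) (t0 : T) (q0 : pt) (dir : T -> option K) (dl : T -> R) :
  (forall s t, s != t0 -> t != t0 -> dir s = dir t -> s = t) ->
  (forall t, t != t0 -> dir t != None) ->
  (forall t, t != t0 -> dl t != 0) ->
  aff_indepT (pstar t0 q0 dir dl).
Proof.
move=> inj hN hd c h0 h1 h2.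
pose p := pstar t0 q0 dir dl.
have hc k : \sum_s c s * coord k (p s) = 0.
  by case: k => [e|v] /=; [exact: h1 | exact: h2].
have ht t : t != t0 -> c t = 0.
  move=> tt0; case E: (dir t) => [k|]; last by move: (hN t tt0); rewrite E.
  have := hc k.
  have -> : \sum_s c s * coord k (p s) =
            \sum_s (c s * coord k q0 + (s == t)%:R * (c t * dl t)).
    apply: eq_bigr => s _; rewrite /p /pstar.
    case: (eqVneq s t0) => [->|st0].
      by rewrite ?eqxx eq_sym (negbTE tt0) mul0r addr0.
    rewrite ?(negbTE st0) coord_bump -E.
    case: (eqVneq s t) => [->|st]; first by rewrite ?eqxx !mul1r mulrDr.
    have -> : (dir t == dir s) = false.
      apply/negbTE/eqP => h; move: st; rewrite (inj _ _ st0 tt0 (esym h)).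
      by rewrite eqxx.
    by rewrite !mul0r !addr0.
  rewrite big_split /= -mulr_suml h0 mul0r add0r.
  rewrite (sum_delta (fun _ => c t * dl t)) => /eqP.
  by rewrite mulf_eq0 (negbTE (hd t tt0)) orbF => /eqP.
move=> t; case: (eqVneq t t0) => [->|]; last exact: ht.
move: h0; rewrite (bigD1 t0) //= big1 ?addr0 // => s; exact: ht.
Qed.

Lemma ub (S : pt -> Prop) (I : finType) (k : nat) (F : pt -> I -> R) :
  (#|I| < k)%N ->
  (forall (p : 'I_k -> pt) (c : 'I_k -> R), (forall i, S (p i)) ->
     (forall j, \sum_i c i * F (p i) j = 0) ->
     [/\ \sum_i c i = 0, forall e, \sum_i c i * (p i).1 e = 0
       & forall v, \sum_i c i * (p i).2 v = 0]) ->
  ~ has_aff_indep S k.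
Proof.
move=> hk hF [p [hS hp]].
have [c [[i ci] hc]] := exists_dep (fun i j => F (p i) j) hk.
have [h0 h1 h2] := hF p c hS hc.
by move: ci; rewrite (hp c h0 h1 h2 i) eqxx.
Qed.

Definition Ffull (p : pt) (o : option K) : R :=
  if o is Some k then coord k p else 1.

Lemma full_ub (S : pt -> Prop) : ~ has_aff_indep S #|{: option K}|.+1.
Proof.
apply: (@ub _ _ _ Ffull) => // p c _ hc; split.
- by have := hc None; under eq_bigr do rewrite /= mulr1.
- by move=> e; exact: hc (Some (inl e)).
- by move=> v; exact: hc (Some (inr v)).
Qed.

Lemma face_ub (S : pt -> Prop) (kf : K) (beta : R) :
  (forall p, S p -> coord kf p = beta) -> ~ has_aff_indep S #|{: K}|.+1.
Proof.
move=> hb.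
apply: (@ub _ _ _ (fun p k => if k == kf then 1 else coord k p)) => // p c hS hc.
have s0 : \sum_i c i = 0.
  by have := hc kf; rewrite /=; under eq_bigr do rewrite eqxx mulr1.
have hk k : \sum_i c i * coord k (p i) = 0.
  case: (eqVneq k kf) => [->|nk].
    under eq_bigr => i _ do rewrite (hb _ (hS i)).
    by rewrite -mulr_suml s0 mul0r.
  by have := hc k; under eq_bigr do rewrite (negbTE nk).
by split => //; [move=> e; exact: hk (inl e) | move=> v; exact: hk (inr v)].
Qed.

Lemma bumpx_P1 (b : R) (q : pt) f d : P1 b q -> 0 <= d -> P1 b (bump q (Some (inl f)) d).
Proof.
case=> hx hy he hs hd; split => //=.
- by move=> e; apply: addr_ge0 => //; apply: mulr_ge0 => //; exact: ler0n.
- move=> e; apply: le_trans (he e) _; rewrite lerDl.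
  by apply: mulr_ge0 => //; exact: ler0n.
Qed.

Lemma sum_bumpy q z d :
  \sum_w (bump q (Some (inr z)) d).2 w = \sum_w q.2 w + d.
Proof. by rewrite /= big_split /= (sum_delta (fun _ => d)). Qed.

Lemma bumpy_P1 (b : R) (q : pt) z d : P1 b q -> 0 <= d -> q.2 z + d <= 1 ->
  \sum_w q.2 w + d <= b -> P1 b (bump q (Some (inr z)) d).
Proof.
move=> hq hd hz hb; case: hq => hx hy he hs; split => //.
- move=> w /=; case: (eqVneq w z) => [->|nz]; rewrite ?mul1r ?mul0r ?addr0.
    by split => //; apply: addr_ge0 => //; case: (hy z).
  exact: hy.
- move=> e; apply: le_trans (he e); rewrite lerD2l lerN2.
  apply: ler_sum => w _ /=; rewrite lerDl.
  by apply: mulr_ge0 => //; exact: ler0n.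
- by rewrite sum_bumpy.
Qed.

Lemma coord_bump_ne kf q s d : kf != s -> coord kf (bump q (Some s) d) = coord kf q.
Proof.
move=> ne; rewrite coord_bump.
have -> : (Some kf == Some s) = false.
  by apply/eqP => -[h]; move: ne; rewrite h eqxx.
by rewrite mul0r addr0.
Qed.

Definition qbase : pt := (fun _ => 1, fun _ => 0).

Lemma sum_qbase : \sum_w qbase.2 w = 0.
Proof. by rewrite big1. Qed.

Lemma qbase_P1 (b : R) : 0 <= b -> P1 b qbase.
Proof.
move=> hb; split => /=.
- by move=> e; exact: ler01.
- by move=> v; split => //; exact: ler01.
- by move=> e; rewrite big1 ?subr0.
- by rewrite big1.
Qed.

Lemma full_lb (b : R) : 1 <= b -> has_aff_indep (P1 (adj:=adj) b) #|{: option K}|.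
Proof.
move=> hb.
have hb0 : 0 <= b by apply: le_trans hb; exact: ler01.
apply: (@transfer _ _ (pstar None qbase id (fun _ => 1))).
  case=> [[f|z]|].
  - change (P1 b (bump qbase (Some (inl f)) 1)).
    by apply: bumpx_P1; [exact: qbase_P1 | exact: ler01].
  - change (P1 b (bump qbase (Some (inr z)) 1)).
    apply: bumpy_P1; [exact: qbase_P1 | exact: ler01 | by rewrite /= add0r |].
    by rewrite sum_qbase add0r.
  - exact: qbase_P1.
apply: star_indep.
- by move=> s t _ _ ->.
- by move=> t.
- by move=> t _; rewrite oner_eq0.
Qed.

Lemma face_lb (S : pt -> Prop) kf q0 dl : S q0 -> (forall s, s != kf -> dl s != 0) ->
  (forall s, s != kf -> S (bump q0 (Some s) (dl s))) -> has_aff_indep S #|{: K}|.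
Proof.
move=> h0 hd hs.
apply: (@transfer _ _ (pstar kf q0 Some dl)).
  by move=> t; rewrite /pstar; case: (eqVneq t kf) => // ne; exact: hs.
apply: star_indep => //.
by move=> s t _ _ [].
Qed.

Lemma assemble (b : R) ax ay (beta : R) (kf : K) (gam : R) : 1 <= b -> valid_ineq (P1 (adj:=adj) b) ax ay beta ->
  (forall p, face (P1 (adj:=adj) b) ax ay beta p -> coord kf p = gam) ->
  has_aff_indep (face (P1 (adj:=adj) b) ax ay beta) #|{: K}| ->
  facet_defining (P1 (adj:=adj) b) ax ay beta.
Proof.
move=> hb hv hf hl; split => //; exists (#|{: option K}|%:Z - 1); split.
- exists #|{: option K}|; split => //; split; [exact: full_lb | exact: full_ub].
- exists #|{: K}|; split; first by split; [done | exact: face_ub hf].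
  by rewrite card_option -addn1 PoszD addrK.
Qed.

Lemma lin1 (e : edge adj) (p : pt) : linform (fun f => - unit_e R e f) (zero_v R (V:=V)) p = - p.1 e.
Proof.
rewrite /linform /unit_e /zero_v.
rewrite [X in _ + X]big1 ?addr0; last by move=> v _; rewrite mul0r.
under eq_bigr do rewrite mulNr.
by rewrite sumrN sum_delta.
Qed.

Lemma lin2 (v : V) (p : pt) : linform (zero_e R (adj:=adj)) (fun w => - unit_v R v w) p = - p.2 v.
Proof.
rewrite /linform /unit_v /zero_e.
rewrite [X in X + _]big1 ?add0r; last by move=> e _; rewrite mul0r.
under eq_bigr do rewrite mulNr.
by rewrite sumrN sum_delta.
Qed.

Lemma lin3 (v : V) (p : pt) : linform (zero_e R (adj:=adj)) (unit_v R v) p = p.2 v.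
Proof.
rewrite /linform /unit_v /zero_e.
rewrite [X in X + _]big1 ?add0r; last by move=> e _; rewrite mul0r.
by rewrite sum_delta.
Qed.

Lemma lin1c (e : edge adj) (p : pt) : linform (fun f => - unit_e R e f) (zero_v R (V:=V)) p = - coord (inl e) p.
Proof. exact: lin1. Qed.
Lemma lin2c (v : V) (p : pt) : linform (zero_e R (adj:=adj)) (fun w => - unit_v R v w) p = - coord (inr v) p.
Proof. exact: lin2. Qed.
Lemma lin3c (v : V) (p : pt) : linform (zero_e R (adj:=adj)) (unit_v R v) p = coord (inr v) p.
Proof. exact: lin3. Qed.

End Pf.

Theorem proposition2 (R : realType) (V : finType) (adj : rel V)
  (adj_sym : symmetric adj) (adj_irr : irreflexive adj) (b : R) :
  [/\ (2 <= b -> forall e : edge adj,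
         (* x_e >= 0, written as  - x_e <= 0 *)
         facet_defining (P1 b) (fun f => - unit_e R e f) (@zero_v R V) 0),
      (1 <= b -> forall v : V,
         (* y_v >= 0, written as  - y_v <= 0 *)
         facet_defining (P1 b) (@zero_e R V adj) (fun w => - unit_v R v w) 0)
    & (2 <= b -> forall v : V,
         (* y_v <= 1 *)
         facet_defining (P1 b) (@zero_e R V adj) (unit_v R v) 1)].
Proof.
split.
- move=> hb e.
  have hb1 : 1 <= b by lra.
  have [u [w [huw hE]]] : exists u w, adj u w /\ val e = [set u; w].
    by case/existsP: (valP e) => u /existsP [w /andP [h /eqP E]]; exists u, w.
  have uw : u != w by apply/eqP => h; move: huw; rewrite h adj_irr.
  have hc : #|val e| = 2%N by rewrite hE cards2 uw.
  pose q0 : point R adj := (fun f => if f == e then 0 else 1,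
                            fun z => if z \in val e then 1/2 else 0).
  pose dl := fun k : (edge adj + V)%type => (match k with inl _ => 1 | inr _ => 1/2 end : R).
  have sumq : \sum_z q0.2 z = 1.
    by rewrite /= -big_mkcond /= sumr_const hc mulr2n; lra.
  have q0P : P1 b q0.
    split => /=.
    + by move=> f; case: (f == e); lra.
    + by move=> z; case: (z \in val e); split; lra.
    + move=> f; case: (eqVneq f e) => [->|ne].
        rewrite (eq_bigr (fun _ => 1/2)) => [|z ->] //.
        by rewrite sumr_const hc mulr2n; lra.
      have : 0 <= \sum_(z in val f) (if z \in val e then 1/2 else 0 : R).
        by apply: sumr_ge0 => z _; case: (_ \in _); lra.
      lra.
    + by rewrite -[X in X <= _]/(\sum_z q0.2 z) sumq; lra.
  apply: (assemble (kf := inl e) (gam := 0)) => //.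
  + by move=> p [hx _ _ _]; rewrite lin1 oppr_le0.
  + by move=> p [_]; rewrite lin1c => /eqP; rewrite oppr_eq0 => /eqP.
  + apply: (face_lb (kf := inl e) (q0 := q0) (dl := dl)).
    * by split => //; rewrite lin1 /= ?eqxx oppr0.
    * by case=> [f|z] /= _; apply/eqP; lra.
    * case=> [f|z] ne; split.
      - by apply: bumpx_P1 => //=; lra.
      - rewrite lin1c coord_bump_ne; last by rewrite eq_sym.
        by rewrite /= ?eqxx oppr0.
      - apply: bumpy_P1 => //=; [lra | case: (z \in val e); lra | rewrite sumq; lra].
      - rewrite lin1c coord_bump_ne; last by rewrite eq_sym.
        by rewrite /= ?eqxx oppr0.
- move=> hb v.
  have hb0 : 0 <= b by lra.
  apply: (assemble (kf := inr v) (gam := 0)) => //.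
  + by move=> p [_ hy _ _]; rewrite lin2 oppr_le0; case: (hy v).
  + by move=> p [_]; rewrite lin2c => /eqP; rewrite oppr_eq0 => /eqP.
  + apply: (face_lb (kf := inr v) (q0 := qbase R adj) (dl := fun _ => 1)).
    * by split; [exact: qbase_P1 | rewrite lin2 /= oppr0].
    * by move=> s _; rewrite oner_eq0.
    * case=> [f|z] ne; split.
      - by apply: bumpx_P1; [exact: qbase_P1 | exact: ler01].
      - rewrite lin2c coord_bump_ne; last by rewrite eq_sym.
        by rewrite /= ?eqxx oppr0.
      - apply: bumpy_P1; [exact: qbase_P1 | exact: ler01 | by rewrite /= add0r |].
        by rewrite sum_qbase add0r.
      - rewrite lin2c coord_bump_ne; last by rewrite eq_sym.
        by rewrite /= ?eqxx oppr0.
- move=> hb v.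
  have hb1 : 1 <= b by lra.
  have hb0 : 0 <= b by lra.
  pose q0 := bump (qbase R adj) (Some (inr v)) 1.
  have sumq : \sum_z q0.2 z = 1 by rewrite sum_bumpy sum_qbase add0r.
  have q0P : P1 b q0.
    apply: bumpy_P1; [exact: qbase_P1 | exact: ler01 | by rewrite /= add0r |].
    by rewrite sum_qbase add0r.
  apply: (assemble (kf := inr v) (gam := 1)) => //.
  + by move=> p [_ hy _ _]; rewrite lin3; case: (hy v).
  + by move=> p [_]; rewrite lin3c.
  + apply: (face_lb (kf := inr v) (q0 := q0) (dl := fun _ => 1)).
    * by split => //; rewrite lin3 /= ?eqxx mul1r add0r.
    * by move=> s _; rewrite oner_eq0.
    * case=> [f|z] ne; split.
      - by apply: bumpx_P1 => //; exact: ler01.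
      - rewrite lin3c coord_bump_ne; last by rewrite eq_sym.
        by rewrite /= ?eqxx mul1r add0r.
      - have nz : z != v by apply: contra ne => /eqP ->.
        apply: bumpy_P1; [exact: q0P | exact: ler01 | by rewrite /= (negbTE nz) mul0r !add0r |].
        by rewrite sumq; lra.
      - rewrite lin3c coord_bump_ne; last by rewrite eq_sym.
        by rewrite /= ?eqxx mul1r add0r.
Qed.
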